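(* If a $\star$-metric space $(X,d^\star)$ has a dense subset $M$ (dense in $(X,\mathscr{T}_{d^\star})$) such that $(M,d^\star|_{M\times M})$ is totally bounded, then $(X,d^\star)$ is totally bounded.
   Context: A $t$-definer is a function $\star:[0,\infty)\times[0,\infty)\to[0,\infty)$ such that for all $a,b,c\ge 0$: $a\star b=b\star a$; $a\star(b\star c)=(a\star b)\star c$; if $a\le b$ then $a\star c\le b\star c$; $a\star 0=a$; and $\star$ is continuous in its first variable with respect to the Euclidean topology. Given a nonempty set $X$ and a $t$-definer $\star$, a $\star$-metric on $X$ is a function $d^\star:X\times X\to[0,\infty)$ such that for all $x,y,z\in X$: $d^\star(x,y)=0$ iff $x=y$; $d^\star(x,y)=d^\star(y,x)$; and $d^\star(x,y)\le d^\star(x,z)\star d^\star(z,y)$. Let $\mathscr{T}_{d^\star}$ be the topology consisting of all $U\subseteq X$ such that for each $a\in U$ there is $r>0$ with $\{x: d^\star(a,x)<r\}\subseteq U$. A $\star$-metric space $(Y,\rho)$ is totally bounded if for every $\epsilon>0$ there is a finite $F\subseteq Y$ with $Y=\bigcup_{x\in F}\{y\in Y:\rho(x,y)<\epsilon\}$. *)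

(* Defs.v *)
From Stdlib Require Import Reals List.
Open Scope R_scope.

(* A t-definer: a binary operation on [0,oo).  We model it as a function
   R -> R -> R whose axioms are required on nonnegative arguments, and which
   maps [0,oo) x [0,oo) into [0,oo). *)
Definition t_definer (star : R -> R -> R) : Prop :=
  (forall a b, 0 <= a -> 0 <= b -> 0 <= star a b) /\
  (forall a b, 0 <= a -> 0 <= b -> star a b = star b a) /\
  (forall a b c, 0 <= a -> 0 <= b -> 0 <= c ->
      star a (star b c) = star (star a b) c) /\
  (forall a b c, 0 <= a -> 0 <= b -> 0 <= c -> a <= b -> star a c <= star b c) /\
  (forall a, 0 <= a -> star a 0 = a) /\
  (forall c a, 0 <= c -> 0 <= a ->
      forall eps, 0 < eps -> exists delta, 0 < delta /\
        forall a', 0 <= a' -> Rabs (a' - a) < delta ->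
          Rabs (star a' c - star a c) < eps).

Definition star_metric {X : Type} (star : R -> R -> R) (d : X -> X -> R) : Prop :=
  (forall x y, 0 <= d x y) /\
  (forall x y, d x y = 0 <-> x = y) /\
  (forall x y, d x y = d y x) /\
  (forall x y z, d x y <= star (d x z) (d z y)).

Definition d_open {X : Type} (d : X -> X -> R) (U : X -> Prop) : Prop :=
  forall a, U a -> exists r, 0 < r /\ forall x, d a x < r -> U x.

Definition d_closure {X : Type} (d : X -> X -> R) (M : X -> Prop) (x : X) : Prop :=
  forall U, d_open d U -> U x -> exists m, M m /\ U m.

Definition d_dense {X : Type} (d : X -> X -> R) (M : X -> Prop) : Prop :=
  forall x, d_closure d M x.

Definition totally_bounded {Y : Type} (rho : Y -> Y -> R) : Prop :=
  forall eps, 0 < eps -> exists F : list Y,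
    forall y, exists x, In x F /\ rho x y < eps.

Definition restrict_metric {X : Type} (d : X -> X -> R) (M : X -> Prop)
  : {x | M x} -> {x | M x} -> R :=
  fun p q => d (proj1_sig p) (proj1_sig q).

(* Main.v *)
Require Import Defs.
From Stdlib Require Import Reals List Lra.
Open Scope R_scope.

Theorem corollary3p6 (X : Type) (star : R -> R -> R) (d : X -> X -> R)
  (M : X -> Prop) :
  inhabited X ->
  t_definer star ->
  star_metric star d ->
  d_dense d M ->
  totally_bounded (restrict_metric d M) ->
  totally_bounded d.
Proof.
  intros _ [Hpos [Hcom [Hass [Hmon [H0 Hcont]]]]] [Dpos [Deq [Dsym Dtri]]] Hdense Htb.
  intros eps Heps.
  set (d1 := eps / 2).
  assert (Hd1 : 0 < d1) by (unfold d1; lra).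
  destruct (Hcont d1 0 (Rlt_le _ _ Hd1) (Rle_refl 0) (eps - d1)) as [eta [Heta HE]].
  { unfold d1; lra. }
  set (a := Rmin (eta / 2) d1).
  assert (Ha : 0 < a) by (unfold a; apply Rmin_pos; lra).
  assert (Ha1 : a <= d1) by (unfold a; apply Rmin_r).
  assert (Haeta : a < eta) by (unfold a; pose proof (Rmin_l (eta/2) d1); lra).
  assert (Hsa : star a d1 < eps).
  { specialize (HE a (Rlt_le _ _ Ha)).
    rewrite (Hcom 0 d1) in HE by lra. rewrite (H0 d1) in HE by lra.
    rewrite Rminus_0_r in HE. rewrite Rabs_pos_eq in HE by lra.
    specialize (HE Haeta). apply Rabs_def2 in HE. lra. }
  destruct (Htb a Ha) as [F HF].
  exists (map (@proj1_sig X M) F).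
  intro x.
  destruct (Hdense x (fun y => d x y < d1)) as [m [Mm Hm]].
  { intros b Hb.
    destruct (Hcont (d x b) 0 (Dpos x b) (Rle_refl 0) (d1 - d x b)) as [r [Hr Hr']].
    { lra. }
    exists r. split; [exact Hr|].
    intros y Hy.
    pose proof (Dtri x y b) as T.
    specialize (Hr' (d b y) (Dpos b y)).
    rewrite Rminus_0_r, Rabs_pos_eq in Hr' by apply Dpos.
    specialize (Hr' Hy). apply Rabs_def2 in Hr'.
    rewrite (Hcom 0 (d x b)) in Hr' by (apply Dpos || lra).
    rewrite (H0 (d x b)) in Hr' by apply Dpos.
    rewrite (Hcom (d x b) (d b y)) in T by apply Dpos. lra. }
  { rewrite (proj2 (Deq x x) eq_refl). exact Hd1. }
  destruct (HF (exist _ m Mm)) as [[f Mf] [Hin Hf]].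
  unfold restrict_metric in Hf; simpl in Hf.
  exists f. split.
  { change f with (proj1_sig (exist M f Mf)). apply in_map. exact Hin. }
  pose proof (Dtri f x m) as T.
  assert (P1 : star (d f m) (d m x) <= star a (d m x)).
  { apply Hmon; try apply Dpos; lra. }
  assert (P2 : star (d m x) a <= star d1 a).
  { apply Hmon; try apply Dpos; try lra. rewrite Dsym; lra. }
  rewrite (Hcom (d m x) a) in P2 by (apply Dpos || lra).
  rewrite (Hcom d1 a) in P2 by lra.
  lra.
Qed.
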